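(* Let $\mathcal{P}$ be a data distribution on $\mathcal{X}\times[C]$, $D_T$ a fixed test set, and $z_i$ a consistently helpful or consistently harmful training point (as defined in the context). For $k\in\{0,\dots,n-1\}$ let $\tau_k=\mathbb{E}_{D_N\sim\mathcal{P}^{n-1}|z_i}[\Delta^{D_N}_{z_i}(k,D_T)]$ and $\delta_k=\mathrm{Var}_{D_N\sim\mathcal{P}^{n-1}|z_i}(\Delta^{D_N}_{z_i}(k,D_T))$, where $D_N\sim\mathcal{P}^{n-1}|z_i$ means $D_N$ consists of $z_i$ and $n-1$ further points drawn i.i.d. from $\mathcal{P}$. Assume $n^{-1}\sum_{k=0}^{n-1}\delta_k\le\delta_{n-1}$ and $|\tau_0|\ge|\tau_1|\ge\dots\ge|\tau_{n-1}|$. Then $$\frac{n^{-1}\sum_{k=0}^{n-1}\delta_k}{\left(n^{-1}\sum_{k=0}^{n-1}\tau_k\right)^2}\le\frac{\delta_{n-1}}{\tau_{n-1}^2}.$$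
   Context: For $S\subseteq N=\{1,\dots,n\}$, $f_S$ is the classifier obtained by training (by a fixed procedure) on $\{z_j:j\in S\}\subseteq D_N$, and $U(S,D_T)=\frac{1}{|D_T|}\sum_{(x_t,y_t)\in D_T}\mathbf{1}[f_S(x_t)=y_t]$. The marginal contribution of $z_i$ to subsets of size $k$ is $\Delta^{D_N}_{z_i}(k,D_T)=\binom{n-1}{k}^{-1}\sum_{S\subseteq N\setminus\{i\},\,|S|=k}\big(U(S\cup\{i\},D_T)-U(S,D_T)\big)$. The point $z_i$ is consistently helpful if $\tau_k\ge0$ for all $k\in\{0,\dots,n-1\}$ and consistently harmful if $\tau_k<0$ for all such $k$. *)

(* Defs.v *)
From HB Require Import structures.
From mathcomp Require Import all_boot all_order all_algebra.
From mathcomp Require Import all_classical all_reals.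
From mathcomp Require Import ereal measure_theory.measurable_structure measure
  lebesgue_measure lebesgue_integral probability.

Set Implicit Arguments.
Unset Strict Implicit.
Unset Printing Implicit Defensive.
Import Order.TTheory GRing.Theory Num.Theory.

Local Open Scope classical_set_scope.
Local Open Scope ring_scope.

(* The label set [C] (C classes), represented as 'I_C.-1.+1, which is 'I_C
   whenever 0 < C (assumed in the theorem).  The .-1.+1 form makes the type
   pointed, as required by MathComp-Analysis for measurable types. *)
Definition label (C : nat) := 'I_C.-1.+1.
HB.instance Definition _ C := Finite.on (label C).
HB.instance Definition _ C := isPointed.Build (label C) ord0.
HB.instance Definition _ C := @isMeasurable.Build default_measure_display
  (label C) discrete_measurable discrete_measurable0
  discrete_measurableC discrete_measurableU.

Section defs.
Context {R : realType} {dX : measure_display} {X : measurableType dX} {C : nat}.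
Local Notation Z := (X * label C)%type.

(* U(S, D_T): accuracy on the test set D_T of the classifier obtained by the
   fixed training procedure [train] on the points {z_j : j in S} of the
   training set D_N = (D j)_(j < n) (fed to [train] in increasing index order). *)
Definition utility (train : seq Z -> X -> label C) (DT : seq Z) (n : nat)
    (D : 'I_n -> Z) (S : {set 'I_n}) : R :=
  (\sum_(t <- DT) ((train [seq D j | j <- enum S] t.1 == t.2)%:R : R))
    / (size DT)%:R.

Definition marginal_contribution (train : seq Z -> X -> label C) (DT : seq Z)
    (n : nat) (D : 'I_n -> Z) (i : 'I_n) (k : nat) : R :=
  ('C(n.-1, k)%:R)^-1 *
  \sum_(S : {set 'I_n} | (i \notin S) && (#|S| == k))
     (utility train DT D (i |: S) - utility train DT D S).

(* D_N ~ P^{n-1} | z_i : the random training set D (on the probability space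
   (Omega, Pr)) has z_i at position i, and its other n-1 points are
   measurable random elements, mutually independent, each with law P. *)
Definition sampled_given {dO : measure_display} {Omega : measurableType dO}
    (Pr : probability Omega R) (P : probability Z R) (n : nat) (i : 'I_n)
    (zi : Z) (D : Omega -> 'I_n -> Z) : Prop :=
  [/\ forall w, D w i = zi,
      forall j, j != i -> measurable_fun setT (fun w => D w j)
    & forall A : 'I_n -> set Z, (forall j, measurable (A j)) ->
        Pr [set w | forall j, j != i -> A j (D w j)]
        = (\prod_(j < n | j != i) P (A j))%E].

(* tau_k = E[Delta(k)] and delta_k = Var(Delta(k)) (finite under the
   measurability assumption of the theorem, since Delta is bounded). *)
Definition tau {dO : measure_display} {Omega : measurableType dO}
    (Pr : probability Omega R) (train : seq Z -> X -> label C) (DT : seq Z)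
    (n : nat) (i : 'I_n) (D : Omega -> 'I_n -> Z) (k : nat) : R :=
  fine ('E_Pr[fun w => marginal_contribution train DT (D w) i k])%E.

Definition delta {dO : measure_display} {Omega : measurableType dO}
    (Pr : probability Omega R) (train : seq Z -> X -> label C) (DT : seq Z)
    (n : nat) (i : 'I_n) (D : Omega -> 'I_n -> Z) (k : nat) : R :=
  fine ('V_Pr[fun w => marginal_contribution train DT (D w) i k]).

End defs.

Definition consistently_helpful {R : realType} (t : nat -> R) (n : nat) :=
  forall k, (k < n)%N -> 0 <= t k.
Definition consistently_harmful {R : realType} (t : nat -> R) (n : nat) :=
  forall k, (k < n)%N -> t k < 0.

(* Main.v *)
Require Import Defs.
From HB Require Import structures.
From mathcomp Require Import all_boot all_order all_algebra.
From mathcomp Require Import all_classical all_reals.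
From mathcomp Require Import ereal measure_theory.measurable_structure measure
  lebesgue_measure lebesgue_integral probability.
From mathcomp Require Import ring lra zify.
Import Order.TTheory GRing.Theory Num.Theory.
Local Open Scope classical_set_scope.
Local Open Scope ring_scope.

Lemma sq_le (R: realDomainType) (a b: R): `|a| <= `|b| -> a^+2 <= b^+2.
Proof.
move=> h; rewrite -(real_normK (num_real a)) -(real_normK (num_real b)).
by rewrite lerXn2r ?nnegrE.
Qed.

Lemma key_ineq (R : realType) (A d T t : R) : 0 <= A -> A <= d -> t ^+ 2 <= T ^+ 2 ->
  (A%:E / (T ^+ 2)%:E <= d%:E / (t ^+ 2)%:E)%E.
Proof.
move=> A0 Ad tT.
have t20 : 0 <= t ^+ 2 by apply: sqr_ge0.
have [t0|t0] := eqVneq (t ^+ 2) 0.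
  rewrite t0 /GRing.inv /= /inve /= eqxx.
  have [d0|dn0] := eqVneq d 0.
    have -> : A = 0 by lra.
    by rewrite d0 !mul0e.
  have dp : 0 < d by lra.
  by rewrite gt0_muley ?lte_fin // leey.
have tp : 0 < t ^+ 2 by rewrite lt0r t0.
have Tp : 0 < T ^+ 2 by apply: lt_le_trans tT.
rewrite /GRing.inv /= /inve /= (negbTE t0) gt_eqF // -!EFinM lee_fin.
apply: (@le_trans _ _ (d / T ^+ 2)).
  by rewrite ler_pM2r ?invr_gt0.
by rewrite ler_wpM2l ?(le_trans A0 Ad) // lef_pV2 // posrE.
Qed.

Theorem corollary3p5 (R : realType) (dX : measure_display) (X : measurableType dX)
    (C : nat) (hC : (0 < C)%N) (P : probability (X * label C)%type R)
    (dO : measure_display) (Omega : measurableType dO) (Pr : probability Omega R)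
    (n : nat) (i : 'I_n) (zi : (X * label C)%type)
    (train : seq (X * label C) -> X -> label C) (DT : seq (X * label C))
    (D : Omega -> 'I_n -> (X * label C)%type) :
  sampled_given Pr P i zi D ->
  (forall S : {set 'I_n},
     measurable_fun setT (fun w => (utility train DT (D w) S : R))) ->
  consistently_helpful (tau Pr train DT i D) n \/
    consistently_harmful (tau Pr train DT i D) n ->
  n%:R^-1 * \sum_(k < n) delta Pr train DT i D k <= delta Pr train DT i D n.-1 ->
  (forall k, (k.+1 < n)%N ->
     `|tau Pr train DT i D k.+1| <= `|tau Pr train DT i D k|) ->
  ((n%:R^-1 * \sum_(k < n) delta Pr train DT i D k)%:E
     / ((n%:R^-1 * \sum_(k < n) tau Pr train DT i D k) ^+ 2)%:E
   <= (delta Pr train DT i D n.-1)%:E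
     / ((tau Pr train DT i D n.-1) ^+ 2)%:E)%E.
Proof.
move=> _ _ hsign hA hmono.
case: n i D hsign hA hmono => [|m] i D hsign hA hmono.
  rewrite big_ord0 mulr0 mul0e.
  apply: mule_ge0; first by rewrite lee_fin; apply: fine_ge0; apply: variance_ge0.
  by rewrite inve_ge0 lee_fin sqr_ge0.
set tau' := tau Pr train DT i D.
set del := delta Pr train DT i D.
have del0 : forall k, 0 <= del k.
  by move=> k; rewrite /del /delta; apply: fine_ge0; apply: variance_ge0.
have A0 : 0 <= m.+1%:R^-1 * \sum_(k < m.+1) del k.
  by apply: mulr_ge0; [rewrite invr_ge0 ler0n | apply: sumr_ge0 => k _].
apply: key_ineq => //.
have mono : forall k, (k < m.+1)%N -> `|tau' m| <= `|tau' k|.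
  have H : forall j k, (k + j = m)%N -> `|tau' m| <= `|tau' k|.
    elim=> [|j IH] k hk; first by rewrite -hk addn0.
    apply: le_trans (IH k.+1 _) (hmono k _); first by rewrite addSnnS.
    lia.
  move=> k hk; apply: (H (m - k)%N); lia.
set T := _ * _.
have sumc : \sum_(k < m.+1) tau' m = m.+1%:R * tau' m.
  by rewrite sumr_const card_ord mulr_natl.
have np : 0 < (m.+1)%:R :> R by rewrite ltr0n.
case: hsign => hs.
  have tk : forall k : 'I_m.+1, tau' m <= tau' k.
    move=> k; have := mono k (ltn_ord k).
    by rewrite !ger0_norm // hs.
  have t0 : 0 <= tau' m by apply: hs.
  have : tau' m <= T.
    rewrite /T -[X in X <= _](mulKf (lt0r_neq0 np)) -sumc.
    apply: ler_wpM2l; first by rewrite invr_ge0 ltW.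
  by apply: ler_sum => k _; apply: tk.
  move=> h; apply: sq_le; rewrite !ger0_norm //; exact: le_trans h.
have tk : forall k : 'I_m.+1, tau' k <= tau' m.
  move=> k; have := mono k (ltn_ord k).
  by rewrite !ltr0_norm ?hs // lerN2.
have t0 : tau' m < 0 by apply: hs.
have : T <= tau' m.
  rewrite /T -[X in _ <= X](mulKf (lt0r_neq0 np)) -sumc.
  apply: ler_wpM2l; first by rewrite invr_ge0 ltW.
  by apply: ler_sum => k _; apply: tk.
move=> h; apply: sq_le; rewrite !ltr0_norm ?lerN2 //; exact: le_lt_trans t0.
Qed.
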